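(* $\mathsf{AP}(R_5,R_5)=\operatorname{Pol}(R_5,R'_5)=\mathsf{L}$.
   Context: Tuples in $\{0,1\}^4$ are written as strings $abcd$. The relations $R_1,\dots,R_5\subseteq\{0,1\}^4$ are $R_1=\{0000,1000,0100,1100,1010,0110,1001,0101,0011,1011,0111,1111\}$, $R_2=\{0000,1000,0100,1100,1010,0101,0011,1111\}$, $R_3=\{0000,1100,1010,0101,0011,1011,0111,1111\}$, $R_4=\{0000,1100,1010,0101,0011,1111\}$, $R_5=\{0000,1100,1010,0110,1001,0101,0011,1111\}$. For $R,S\subseteq\{0,1\}^4$, a Boolean function $f\colon\{0,1\}^n\to\{0,1\}$ is analogy-preserving relative to $(R,S)$ if for all $\mathbf{a},\mathbf{b},\mathbf{c},\mathbf{d}\in\{0,1\}^n$ with $(a_i,b_i,c_i,d_i)\in R$ for every $i$ and such that $(f(\mathbf{a}),f(\mathbf{b}),f(\mathbf{c}),x)\in S$ for some $x\in\{0,1\}$, we have $(f(\mathbf{a}),f(\mathbf{b}),f(\mathbf{c}),f(\mathbf{d}))\in S$; $\mathsf{AP}(R,S)$ is the set of all such functions of all arities. $S':=S\cup\{(a,b,c,d)\mid\nexists x\colon(a,b,c,x)\in S\}$, and $\operatorname{Pol}(R,S)$ is the set of Boolean functions $f$ with $f(\mathbf{a}_1,\dots,\mathbf{a}_n)\in S$ (componentwise) for all $\mathbf{a}_1,\dots,\mathbf{a}_n\in R$. $\mathsf{L}$ is the set of affine Boolean functions $f(x_1,\dots,x_n)=c+a_1x_1+\dots+a_nx_n\pmod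 2$ with $c,a_i\in\{0,1\}$. *)

(* Defs.v *)
From mathcomp Require Import all_boot.
Set Implicit Arguments. Unset Strict Implicit. Unset Printing Implicit Defensive.

(* Boolean 4-ary relations: subsets of {0,1}^4, false = 0, true = 1. *)
Definition rel4 := bool -> bool -> bool -> bool -> bool.

Definition rel_of (l : seq (bool * bool * bool * bool)) : rel4 :=
  fun a b c d => (a, b, c, d) \in l.

Definition R5 : rel4 := rel_of
  [:: (false,false,false,false); (true,true,false,false);
      (true,false,true,false);  (false,true,true,false);
      (true,false,false,true);  (false,true,false,true);
      (false,false,true,true);  (true,true,true,true)].

Definition boolfun (n : nat) := {ffun 'I_n -> bool} -> bool.

Definition rel_prime (S : rel4) : rel4 :=
  fun a b c d => S a b c d || ~~ [exists x : bool, S a b c x].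

Definition compR (R : rel4) n (a b c d : {ffun 'I_n -> bool}) : Prop :=
  forall i : 'I_n, R (a i) (b i) (c i) (d i).

Definition AP (R S : rel4) n (f : boolfun n) : Prop :=
  forall a b c d : {ffun 'I_n -> bool}, compR R a b c d ->
    (exists x : bool, S (f a) (f b) (f c) x) ->
    S (f a) (f b) (f c) (f d).

(* Polymorphisms: for all columns a_1..a_n in R, applying f to the rows
   yields a tuple in S.  Rows are a, b, c, d : {0,1}^n. *)
Definition Pol (R S : rel4) n (f : boolfun n) : Prop :=
  forall a b c d : {ffun 'I_n -> bool}, compR R a b c d ->
    S (f a) (f b) (f c) (f d).

Definition affine n (f : boolfun n) : Prop :=
  exists (c : bool) (coef : {ffun 'I_n -> bool}),
    forall x : {ffun 'I_n -> bool},
      f x = c (+) \big[addb/false]_(i < n) (coef i && x i).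

(* Main.v *)
Require Import Defs.
From mathcomp Require Import all_boot.
From Stdlib Require Import Setoid.

Lemma R5E a b c d : R5 a b c d = ~~ (a (+) b (+) c (+) d).
Proof. by case: a; case: b; case: c; case: d; vm_compute. Qed.

Lemma R5pE a b c d : rel_prime R5 a b c d = R5 a b c d.
Proof.
rewrite /rel_prime.
have -> : [exists x, R5 a b c x].
  by apply/existsP; exists (a (+) b (+) c); rewrite R5E; case: a; case: b; case: c.
by rewrite orbF.
Qed.

Section S.
Variable n : nat.
Variable f : boolfun n.

Definition z0 : {ffun 'I_n -> bool} := [ffun => false].
Definition xorf (x y : {ffun 'I_n -> bool}) : {ffun 'I_n -> bool} :=
  [ffun j => x j (+) y j].
Definition ev (i : 'I_n) : {ffun 'I_n -> bool} := [ffun j => j == i].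
Definition L x := f x (+) f z0.

Hypothesis Hpol : Pol R5 R5 f.

Lemma Llin x y : L (xorf x y) = L x (+) L y.
Proof.
have H := Hpol x y z0 (xorf x y).
have : compR R5 x y z0 (xorf x y).
  by move=> i; rewrite R5E !ffunE; case: (x i); case: (y i).
move/H; rewrite R5E /L.
by case: (f x); case: (f y); case: (f z0); case: (f (xorf x y)).
Qed.

Lemma Lsum (x : {ffun 'I_n -> bool}) (s : seq 'I_n) : uniq s ->
  L [ffun j => (j \in s) && x j] =
  \big[addb/false]_(i <- s) ((L (ev i)) && x i).
Proof.
elim: s => [|i s IH] /=.
  rewrite big_nil /L.
  have -> : [ffun j => (j \in [::]) && x j] = z0 by apply/ffunP => j; rewrite !ffunE.
  by rewrite addbb.
move=> /andP [nis us].
rewrite big_cons -IH //.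
have -> : [ffun j => (j \in i :: s) && x j] =
  xorf (if x i then ev i else z0) [ffun j => (j \in s) && x j].
  apply/ffunP => j; rewrite !ffunE in_cons.
  case: (eqVneq j i) => [->|nji] /=.
    rewrite (negbTE nis) /=; by case: (x i); rewrite ffunE ?eqxx.
  by case: (x i); rewrite ffunE ?(negbTE nji).
rewrite Llin; case: (x i); rewrite ?andbT ?andbF //.
by rewrite /L addbb.
Qed.

End S.

Theorem mainTheorem10 :
  forall (n : nat) (f : boolfun n),
    (AP R5 R5 f <-> Pol R5 (rel_prime R5) f) /\
    (Pol R5 (rel_prime R5) f <-> affine f).
Proof.
move=> n f.
have E1 : Pol R5 (rel_prime R5) f <-> Pol R5 R5 f.
  by split=> H a b c d Hc; move: (H a b c d Hc); rewrite R5pE.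
rewrite E1; split.
  split=> H a b c d Hc.
    apply: (H a b c d Hc); exists (f a (+) f b (+) f c).
    by rewrite R5E; case: (f a); case: (f b); case: (f c).
  by move=> _; apply: H.
split.
  move=> H; exists (f (z0 n)), [ffun i : 'I_n => @L n f (@ev n i)] => x.
  have Hx : x = [ffun j => (j \in index_enum 'I_n) && x j].
    by apply/ffunP => j; rewrite ffunE mem_index_enum.
  have HL := @Lsum n f H x _ (index_enum_uniq 'I_n); rewrite -Hx in HL.
  have -> : \big[addb/false]_(i < n) ([ffun i : 'I_n => @L n f (@ev n i)] i && x i)
     = \big[addb/false]_(i <- index_enum 'I_n) (@L n f (@ev n i) && x i).
    by apply: eq_bigr => i _; rewrite ffunE.
  rewrite -HL /L.
  by case: (f x); case: (f (z0 n)).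
move=> [c [coef Hf]] a b cc d Hc.
rewrite R5E !Hf.
have -> : forall (p q r s : bool), c (+) p (+) (c (+) q) (+) (c (+) r) (+) (c (+) s)
   = p (+) q (+) r (+) s.
  by move=> p q r s; clear Hf; case: c; case: p; case: q; case: r; case: s.
rewrite -!big_split /=.
rewrite big1 // => i _.
move: (Hc i); rewrite R5E.
by case: (coef i); case: (a i); case: (b i); case: (cc i); case: (d i).
Qed.
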